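(* There exists an infinite class of 4-planar graphs such that no graph $G$ in the class admits a planar octilinear drawing without bends, and every planar octilinear drawing of a graph $G$ with $n$ vertices in the class having at most one bend per edge has $\Omega(n)$ bends in total.
   Context: A $k$-planar graph is a planar graph in which every vertex has degree at most $k$. An octilinear drawing of a graph places every vertex on a point of the integer grid and draws every edge as a polyline consisting of horizontal, vertical and diagonal (slope $\pm 1$) line segments; a bend is a point of an edge where two consecutive segments of different slopes meet. The drawing is planar if no two edges cross. *)

(* Defs.v *)
From mathcomp Require Import all_boot.
From Stdlib Require Import Reals ZArith.

Set Implicit Arguments.
Unset Strict Implicit.
Unset Printing Implicit Defensive.

Definition simple_graph (n : nat) (e : rel 'I_n) : Prop :=
  (forall u v, e u v = e v u) /\ (forall u, ~~ e u u).

Definition deg (n : nat) (e : rel 'I_n) (u : 'I_n) : nat := #|[set v | e u v]|.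

Definition pt := (R * R)%type.
Definition pt0 : pt := (0%R, 0%R).

Definition on_seg (a b x : pt) : Prop :=
  exists t : R, (0 <= t <= 1)%R /\
    x = (a.1 + t * (b.1 - a.1), a.2 + t * (b.2 - a.2))%R.

(* A polyline is the list of its points (endpoints and intermediate points). *)
Definition pnth (p : seq pt) (i : nat) : pt := nth pt0 p i.

Definition on_polyline (p : seq pt) (x : pt) : Prop :=
  exists i, i.+1 < size p /\ on_seg (pnth p i) (pnth p i.+1) x.

Definition simple_polyline (p : seq pt) : Prop :=
  (forall i, i.+1 < size p -> pnth p i <> pnth p i.+1) /\
  (forall i j x, i < j -> j.+1 < size p ->
     on_seg (pnth p i) (pnth p i.+1) x -> on_seg (pnth p j) (pnth p j.+1) x ->
     j = i.+1 /\ x = pnth p j).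

Definition octilinear_seg (a b : pt) : Prop :=
  let dx := (b.1 - a.1)%R in let dy := (b.2 - a.2)%R in
  dx = 0%R \/ dy = 0%R \/ dx = dy \/ dx = (- dy)%R.

(* consecutive segments [a,q] and [q,b] have different slopes *)
Definition is_bend (a q b : pt) : bool :=
  if Req_EM_T ((q.1 - a.1) * (b.2 - q.2) - (q.2 - a.2) * (b.1 - q.1))%R 0%R
  then false else true.

Definition bends (p : seq pt) : nat :=
  count (fun i => is_bend (pnth p i.-1) (pnth p i) (pnth p i.+1))
        (iota 1 (size p).-2).

(* pos: vertex positions; route u v: intermediate points of the polyline of
   the edge {u,v}, drawn from u to v, used for u < v. *)
Record drawing (n : nat) := Drawing {
  pos : 'I_n -> pt;
  route : 'I_n -> 'I_n -> seq pt }.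

Definition edge_poly n (d : drawing n) (u v : 'I_n) : seq pt :=
  pos d u :: route d u v ++ [:: pos d v].

Definition is_edge n (e : rel 'I_n) (u v : 'I_n) : bool := (u < v) && e u v.

Definition planar_drawing n (e : rel 'I_n) (d : drawing n) : Prop :=
  injective (pos d) /\
  (forall u v, is_edge e u v -> simple_polyline (edge_poly d u v)) /\
  (forall u v w, is_edge e u v -> w <> u -> w <> v ->
      ~ on_polyline (edge_poly d u v) (pos d w)) /\
  (forall u v u' v' x, is_edge e u v -> is_edge e u' v' -> (u, v) <> (u', v') ->
      on_polyline (edge_poly d u v) x -> on_polyline (edge_poly d u' v') x ->
      exists w, (w = u \/ w = v) /\ (w = u' \/ w = v') /\ x = pos d w).

Definition planar n (e : rel 'I_n) : Prop := exists d : drawing n, planar_drawing e d.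

Definition k_planar (k : nat) n (e : rel 'I_n) : Prop :=
  planar e /\ forall u, deg e u <= k.

Definition planar_octilinear_drawing n (e : rel 'I_n) (d : drawing n) : Prop :=
  planar_drawing e d /\
  (forall v, exists a b : Z, pos d v = (IZR a, IZR b)) /\
  (forall u v, is_edge e u v -> forall i, i.+1 < size (edge_poly d u v) ->
      octilinear_seg (pnth (edge_poly d u v) i) (pnth (edge_poly d u v) i.+1)).

Definition edge_bends n (d : drawing n) (u v : 'I_n) : nat := bends (edge_poly d u v).

Definition total_bends n (e : rel 'I_n) (d : drawing n) : nat :=
  \sum_(u < n) \sum_(v < n | is_edge e u v) edge_bends d u v.

(* Main.v *)
Require Import Defs.
From mathcomp Require Import all_boot.
From Stdlib Require Import Reals ZArith.
From mathcomp Require Import zify.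
From Stdlib Require Import Lra Psatz.
Set Implicit Arguments.
Unset Strict Implicit.
Local Notation pos := Defs.pos.

Definition crs (a b c : pt) : R :=
  ((b.1 - a.1) * (c.2 - a.2) - (b.2 - a.2) * (c.1 - a.1))%R.
Definition par (a b c d : pt) : R :=
  ((b.1 - a.1) * (d.2 - c.2) - (b.2 - a.2) * (d.1 - c.1))%R.

Lemma param (d1 d2 w1 w2 : R) : (d1 <> 0 \/ d2 <> 0)%R ->
  (d1 * w2 - d2 * w1 = 0)%R -> exists t, w1 = (t * d1)%R /\ w2 = (t * d2)%R.
Proof.
move=> [h|h] e.
- exists (w1 / d1)%R; split; first by field.
  apply (Rmult_eq_reg_l d1) => //. field_simplify => //. lra.
- exists (w2 / d2)%R; split; last by field.
  apply (Rmult_eq_reg_l d2) => //. field_simplify => //. lra.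
Qed.

Lemma pt_neq (a b : pt) : a <> b -> (b.1 - a.1 <> 0 \/ b.2 - a.2 <> 0)%R.
Proof.
case: a b => [a1 a2] [b1 b2] /= h.
case: (Req_dec (b1 - a1) 0) => h1; last by left.
case: (Req_dec (b2 - a2) 0) => h2; last by right.
exfalso; apply h; f_equal; lra.
Qed.

Lemma collinear (X Y Z : pt) : X <> Y -> X <> Z -> Y <> Z -> crs X Y Z = 0%R ->
  on_seg X Y Z \/ on_seg X Z Y \/ on_seg Y Z X.
Proof.
move=> hxy hxz hyz; rewrite /crs => e.
have [l [l1 l2]] := param (pt_neq hxy) e.
move: hxy hxz hyz l1 l2 {e}; case: X => [x1 x2]; case: Y => [y1 y2]; case: Z => [z1 z2] /=.
move=> hxy hxz hyz l1 l2.
have l0 : l <> 0%R by move=> h; apply hxz; f_equal; nra.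
have l1' : l <> 1%R by move=> h; apply hyz; f_equal; nra.
case: (Rlt_le_dec 1 l) => h1.
- right; left; exists (/ l)%R; split.
  + split; [left; apply Rinv_0_lt_compat; lra| rewrite -Rinv_1; apply Rinv_le_contravar; lra].
  + rewrite l1 l2; cbn; f_equal; field; lra.
case: (Rlt_le_dec 0 l) => h0.
- left; exists l; split; first lra.
  cbn; f_equal; lra.
- right; right; exists (/ (1 - l))%R; split.
  + split; [left; apply Rinv_0_lt_compat; lra| rewrite -Rinv_1; apply Rinv_le_contravar; lra].
  + have -> : (z1 - y1 = (l - 1) * (y1 - x1))%R by lra.
    have -> : (z2 - y2 = (l - 1) * (y2 - x2))%R by lra.
    cbn; f_equal; field; lra.
Qed.

Definition cls (a b : pt) : nat :=
  if Req_EM_T (b.1 - a.1) 0 then 0 else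
  if Req_EM_T (b.2 - a.2) 0 then 1 else
  if Req_EM_T (b.1 - a.1) (b.2 - a.2) then 2 else 3.

Lemma cls_lt a b : cls a b < 4.
Proof. rewrite /cls; do 3 case: Req_EM_T => //. Qed.

Lemma cls_par a b c d : octilinear_seg a b -> octilinear_seg c d ->
  cls a b = cls c d -> par a b c d = 0%R.
Proof.
rewrite /octilinear_seg /cls /par.
case: (Req_EM_T (b.1 - a.1) 0) => h1; case: (Req_EM_T (b.2 - a.2) 0) => h2;
case: (Req_EM_T (b.1 - a.1) (b.2 - a.2)) => h3;
case: (Req_EM_T (d.1 - c.1) 0) => g1; case: (Req_EM_T (d.2 - c.2) 0) => g2;
case: (Req_EM_T (d.1 - c.1) (d.2 - c.2)) => g3 //= o1 o2 _;
rewrite ?h1 ?h2 ?g1 ?g2; try ring;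
try (rewrite h3 g3; ring);
(have k1 : (b.1 - a.1 = - (b.2 - a.2))%R by (case: o1 => [|[|[|]]] //));
(have k2 : (d.1 - c.1 = - (d.2 - c.2))%R by (case: o2 => [|[|[|]]] //));
rewrite k1 k2; ring.
Qed.

Lemma parallelogram (P Q Rr S : pt) : par P Q Rr S = 0%R -> par P Rr Q S = 0%R ->
  crs P Q Rr <> 0%R -> exists x, on_seg P S x /\ on_seg Q Rr x.
Proof.
case: P => [p1 p2]; case: Q => [q1 q2]; case: Rr => [r1 r2]; case: S => [s1 s2].
rewrite /par /crs /= => H1 H2 k.
set u1 := (q1 - p1)%R; set u2 := (q2 - p2)%R; set v1 := (r1 - p1)%R; set v2 := (r2 - p2)%R.
set w1 := (s1 - q1 - r1 + p1)%R; set w2 := (s2 - q2 - r2 + p2)%R.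
have E1 : ((u1 * v2 - u2 * v1) * w1 = v1 * ((q1 - p1) * (s2 - r2) - (q2 - p2) * (s1 - r1))
       - u1 * ((r1 - p1) * (s2 - q2) - (r2 - p2) * (s1 - q1)))%R.
  rewrite /u1 /u2 /v1 /v2 /w1; ring.
have E2 : ((u1 * v2 - u2 * v1) * w2 = v2 * ((q1 - p1) * (s2 - r2) - (q2 - p2) * (s1 - r1))
       - u2 * ((r1 - p1) * (s2 - q2) - (r2 - p2) * (s1 - q1)))%R.
  rewrite /u1 /u2 /v1 /v2 /w2; ring.
rewrite H1 H2 !Rmult_0_r Rminus_0_r in E1 E2.
have w10 : w1 = 0%R.
  case: (Rmult_integral _ _ E1) => // h; exfalso; apply k; rewrite -h /u1 /u2 /v1 /v2; ring.
have w20 : w2 = 0%R.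
  case: (Rmult_integral _ _ E2) => // h; exfalso; apply k; rewrite -h /u1 /u2 /v1 /v2; ring.
rewrite /w1 /w2 in w10 w20.
exists ((p1 + s1) / 2, (p2 + s2) / 2)%R; split; exists (/2)%R; (split; first lra);
cbn; f_equal; lra.
Qed.


Lemma par_swap a b c d : par a b c d = (- par a b d c)%R.
Proof. rewrite /par; ring. Qed.

Lemma cls_neq a b c d : octilinear_seg a b -> octilinear_seg c d ->
  par a b c d <> 0%R -> cls a b <> cls c d.
Proof. by move=> o1 o2 h e; apply h; apply cls_par. Qed.

Lemma comb_b (a b c d e f : nat) : a < 4 -> b < 4 -> c < 4 -> d < 4 -> e < 4 -> f < 4 ->
  [&& a != b, a != c, a != d, a != e, b != c, b != d, b != f, c != e, c != f, d != e, d != f & e != f] ->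
  [|| (a == f) && (b == e), (a == f) && (c == d) | (b == e) && (c == d)].
Proof.
by case: a => [|[|[|[|//]]]]; case: b => [|[|[|[|//]]]]; case: c => [|[|[|[|//]]]];
case: d => [|[|[|[|//]]]]; case: e => [|[|[|[|//]]]]; case: f => [|[|[|[|//]]]].
Qed.

Lemma K4_core (A B C D : pt) :
  A <> B -> A <> C -> A <> D -> B <> C -> B <> D -> C <> D ->
  octilinear_seg A B -> octilinear_seg A C -> octilinear_seg A D ->
  octilinear_seg B C -> octilinear_seg B D -> octilinear_seg C D ->
  ~ on_seg A B C -> ~ on_seg A B D -> ~ on_seg A C B -> ~ on_seg A C D ->
  ~ on_seg A D B -> ~ on_seg A D C -> ~ on_seg B C A -> ~ on_seg B C D ->
  ~ on_seg B D A -> ~ on_seg B D C -> ~ on_seg C D A -> ~ on_seg C D B ->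
  ~ (exists x, on_seg A B x /\ on_seg C D x) ->
  ~ (exists x, on_seg A C x /\ on_seg B D x) ->
  ~ (exists x, on_seg A D x /\ on_seg B C x) -> False.
Proof.
move=> dAB dAC dAD dBC dBD dCD oAB oAC oAD oBC oBD oCD
  n1 n2 n3 n4 n5 n6 n7 n8 n9 n10 n11 n12 x1 x2 x3.
have tABC : crs A B C <> 0%R.
  move=> h; case: (collinear dAB dAC dBC h) => [|[]]; tauto.
have tABD : crs A B D <> 0%R.
  move=> h; case: (collinear dAB dAD dBD h) => [|[]]; tauto.
have tACD : crs A C D <> 0%R.
  move=> h; case: (collinear dAC dAD dCD h) => [|[]]; tauto.
have tBCD : crs B C D <> 0%R.
  move=> h; case: (collinear dBC dBD dCD h) => [|[]]; tauto.
Ltac nz t := let h := fresh in move=> h; apply t; move: h; rewrite /par /crs => h; nra.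
have c1 : cls A B <> cls A C by apply cls_neq => //; nz tABC.
have c2 : cls A B <> cls A D by apply cls_neq => //; nz tABD.
have c3 : cls A B <> cls B C by apply cls_neq => //; nz tABC.
have c4 : cls A B <> cls B D by apply cls_neq => //; nz tABD.
have c5 : cls A C <> cls A D by apply cls_neq => //; nz tACD.
have c6 : cls A C <> cls B C by apply cls_neq => //; nz tABC.
have c7 : cls A C <> cls C D by apply cls_neq => //; nz tACD.
have c8 : cls A D <> cls B D by apply cls_neq => //; nz tABD.
have c9 : cls A D <> cls C D by apply cls_neq => //; nz tACD.
have c10 : cls B C <> cls B D by apply cls_neq => //; nz tBCD.
have c11 : cls B C <> cls C D by apply cls_neq => //; nz tBCD.
have c12 : cls B D <> cls C D by apply cls_neq => //; nz tBCD.
have l1 := cls_lt A B; have l2 := cls_lt A C; have l3 := cls_lt A D.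
have l4 := cls_lt B C; have l5 := cls_lt B D; have l6 := cls_lt C D.
have : (cls A B = cls C D /\ cls A C = cls B D) \/ (cls A B = cls C D /\ cls A D = cls B C)
    \/ (cls A C = cls B D /\ cls A D = cls B C).
  have := comb_b l1 l2 l3 l4 l5 l6.
  rewrite !(introN eqP c1, introN eqP c2, introN eqP c3, introN eqP c4, introN eqP c5, introN eqP c6,
    introN eqP c7, introN eqP c8, introN eqP c9, introN eqP c10, introN eqP c11, introN eqP c12) /=.
  by move=> /(_ isT) /orP [/andP [/eqP -> /eqP ->]|/orP [/andP [/eqP -> /eqP ->]|/andP [/eqP -> /eqP ->]]];
    [left|right; left|right; right].
case=> [[e1 e2]|[[e1 e2]|[e1 e2]]].
- apply x3; apply parallelogram.
  + exact: cls_par e1.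
  + exact: cls_par e2.
  + exact: tABC.
- apply x2; apply parallelogram.
  + rewrite par_swap (cls_par oAB oCD e1); ring.
  + exact: cls_par e2.
  + exact: tABD.
- apply x1; apply parallelogram.
  + rewrite par_swap (cls_par oAC oBD e1); ring.
  + rewrite par_swap (cls_par oAD oBC e2); ring.
  + exact: tACD.
Qed.


Lemma trans_par (u1 u2 v1 v2 w1 w2 : R) : (v1 <> 0 \/ v2 <> 0)%R ->
  (u1 * v2 - u2 * v1 = 0)%R -> (v1 * w2 - v2 * w1 = 0)%R -> (u1 * w2 - u2 * w1 = 0)%R.
Proof.
move=> [h|h] e1 e2.
- apply (Rmult_eq_reg_l v1) => //. rewrite Rmult_0_r.
  have -> : (v1 * (u1 * w2 - u2 * w1) = u1 * (v1 * w2 - v2 * w1) + w1 * (u1 * v2 - u2 * v1))%R by ring.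
  rewrite e1 e2; ring.
- apply (Rmult_eq_reg_l v2) => //. rewrite Rmult_0_r.
  have -> : (v2 * (u1 * w2 - u2 * w1) = u2 * (v1 * w2 - v2 * w1) + w2 * (u1 * v2 - u2 * v1))%R by ring.
  rewrite e1 e2; ring.
Qed.

Lemma cover1 (t : nat -> R) (m : nat) (y : R) :
  ((t O <= y <= t m.+1) \/ (t m.+1 <= y <= t O))%R ->
  exists i, i <= m /\ ((t i <= y <= t i.+1) \/ (t i.+1 <= y <= t i))%R.
Proof.
elim: m => [|m IH] h; first by exists 0%N; split.
case: (Rle_lt_dec (t O) y) => h1; case: (Rle_lt_dec y (t m.+1)) => h2;
case: (Rle_lt_dec (t m.+1) y) => h3; case: (Rle_lt_dec y (t O)) => h4;
first [ (have [i [hi Hi]] := IH ltac:(lra); exists i; split; [lia|exact Hi])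
      | (exists m.+1; split; [done|lra]) ].
Qed.

Lemma seg_param (a : pt) (d1 d2 s u y : R) :
  ((s <= y <= u) \/ (u <= y <= s))%R ->
  on_seg (a.1 + s * d1, a.2 + s * d2)%R (a.1 + u * d1, a.2 + u * d2)%R
         (a.1 + y * d1, a.2 + y * d2)%R.
Proof.
move=> h; case: (Req_dec s u) => e.
- subst u; exists 0%R; split; first lra.
  have -> : y = s by lra. cbn; f_equal; ring.
- exists ((y - s) / (u - s))%R; split.
  + case: h => h.
    * have hp : (0 < u - s)%R by lra.
      split; [rewrite /Rdiv; apply Rmult_le_pos; [lra|left; apply Rinv_0_lt_compat; lra]|].
      apply (Rmult_le_reg_r (u - s)) => //. field_simplify; lra.
    * have hp : (0 < s - u)%R by lra.
      have -> : ((y - s) / (u - s) = (s - y) / (s - u))%R by field; lra.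
      split; [rewrite /Rdiv; apply Rmult_le_pos; [lra|left; apply Rinv_0_lt_compat; lra]|].
      apply (Rmult_le_reg_r (s - u)) => //. field_simplify; lra.
  + cbn; f_equal; field; lra.
Qed.

Lemma bendless (p : seq pt) : 1 < size p ->
  (forall i, i.+1 < size p -> pnth p i <> pnth p i.+1) -> bends p = 0 ->
  (forall i, i.+1 < size p -> octilinear_seg (pnth p i) (pnth p i.+1)) ->
  octilinear_seg (pnth p 0) (pnth p (size p).-1) /\
  forall x, on_seg (pnth p 0) (pnth p (size p).-1) x -> on_polyline p x.
Proof.
move=> hs hnd hb ho.
set P := pnth p.
have nob : forall i, i.+2 < size p ->
  (((P i.+1).1 - (P i).1) * ((P i.+2).2 - (P i.+1).2) -
   ((P i.+1).2 - (P i).2) * ((P i.+2).1 - (P i.+1).1))%R = 0%R.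
  move=> i hi.
  have : ~~ has (fun i => is_bend (pnth p i.-1) (pnth p i) (pnth p i.+1)) (iota 1 (size p).-2).
    by rewrite has_count -/(bends p) hb.
  move/hasPn => /(_ i.+1); rewrite mem_iota.
  have -> : (1 <= i.+1 < 1 + (size p).-2) = true by apply/andP; split => //; lia.
  move=> /(_ isT); rewrite /is_bend; case: Req_EM_T => // e _; exact: e.
set d1 := ((P O.+1).1 - (P O).1)%R; set d2 := ((P O.+1).2 - (P O).2)%R.
have sgnz : forall i, i.+1 < size p ->
    ((P i.+1).1 - (P i).1 <> 0 \/ (P i.+1).2 - (P i).2 <> 0)%R.
  by move=> i hi; apply: pt_neq; apply: hnd.
have dnz : (d1 <> 0 \/ d2 <> 0)%R by apply: sgnz.
have HA : forall i, i.+1 < size p ->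
   (d1 * ((P i.+1).2 - (P i).2) - d2 * ((P i.+1).1 - (P i).1) = 0)%R.
  elim=> [|i IH] hi; first by rewrite /d1 /d2; ring.
  apply: (trans_par (sgnz i _)); first lia.
  - by apply: IH; lia.
  - exact: nob.
have HB : forall i, i < size p ->
   (d1 * ((P i).2 - (P O).2) - d2 * ((P i).1 - (P O).1) = 0)%R.
  elim=> [|i IH] hi; first ring.
  have h1 := IH (ltnW hi). have h2 := HA i hi.
  have -> : (d1 * ((P i.+1).2 - (P O).2) - d2 * ((P i.+1).1 - (P O).1) =
     (d1 * ((P i).2 - (P O).2) - d2 * ((P i).1 - (P O).1)) +
     (d1 * ((P i.+1).2 - (P i).2) - d2 * ((P i.+1).1 - (P i).1)))%R by ring.
  rewrite h1 h2; ring.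
pose t i := if Req_EM_T d1 0 then (((P i).2 - (P O).2) / d2)%R else (((P i).1 - (P O).1) / d1)%R.
have HT : forall i, i < size p ->
   (P i).1 = ((P O).1 + t i * d1)%R /\ (P i).2 = ((P O).2 + t i * d2)%R.
  move=> i hi; have hb' := HB i hi; rewrite /t; case: Req_EM_T => e /=.
  - have d2n : d2 <> 0%R by case: dnz.
    rewrite e in hb'; split.
    + rewrite e Rmult_0_r Rplus_0_r.
      have : (d2 * ((P i).1 - (P O).1) = 0)%R by lra.
      case/Rmult_integral => // ?; lra.
    + by field.
  - split; first by field.
    apply (Rmult_eq_reg_l d1) => //. field_simplify => //. lra.
have t0 : t O = 0%R by rewrite /t; case: Req_EM_T => _ /=; rewrite Rminus_diag /Rdiv Rmult_0_l.
set m := (size p).-2.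
have hm : (size p).-1 = m.+1 by rewrite /m; lia.
rewrite hm.
have [Tm1 Tm2] := HT m.+1 ltac:(lia).
split.
- have o := ho 0 hs; rewrite /octilinear_seg /= in o *.
  rewrite -/(P O) -/(P O.+1) -/(P m.+1) -/d1 -/d2 in o *.
  rewrite Tm1 Tm2.
  have -> : ((P O).1 + t m.+1 * d1 - (P O).1 = t m.+1 * d1)%R by ring.
  have -> : ((P O).2 + t m.+1 * d2 - (P O).2 = t m.+1 * d2)%R by ring.
  case: o => [->|[->|[->|->]]]; [left|right;left|right;right;left|right;right;right]; ring.
- move=> x [tau [htau ->]].
  rewrite -/(P O) -/(P m.+1) Tm1 Tm2.
  have [i [hi Hi]] := @cover1 t m (tau * t m.+1)%R ltac:(rewrite t0; case: (Rle_lt_dec 0 (t m.+1)) => h; [left|right]; nra).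
  exists i; split; first lia.
  have [Ti1 Ti2] := HT i ltac:(lia). have [Tj1 Tj2] := HT i.+1 ltac:(lia).
  rewrite -/(P i) -/(P i.+1).
  have -> : P i = ((P O).1 + t i * d1, (P O).2 + t i * d2)%R by rewrite -Ti1 -Ti2; case: (P i).
  have -> : P i.+1 = ((P O).1 + t i.+1 * d1, (P O).2 + t i.+1 * d2)%R by rewrite -Tj1 -Tj2; case: (P i.+1).
  have -> : ((P O).1 + tau * ((P O).1 + t m.+1 * d1 - (P O).1),
             (P O).2 + tau * ((P O).2 + t m.+1 * d2 - (P O).2))%R =
            ((P O).1 + (tau * t m.+1) * d1, (P O).2 + (tau * t m.+1) * d2)%R by f_equal; ring.
  exact: seg_param.
Qed.


Lemma edge_facts n (e : rel 'I_n) (d : drawing n) u v :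
  planar_octilinear_drawing e d -> is_edge e u v -> edge_bends d u v = 0 ->
  octilinear_seg (pos d u) (pos d v) /\
  forall x, on_seg (pos d u) (pos d v) x -> on_polyline (edge_poly d u v) x.
Proof.
move=> [[inj [hsimp _]] [_ hoct]] he hb.
have hsz : size (edge_poly d u v) = (size (route d u v)).+2 by rewrite /edge_poly /= size_cat /=; lia.
have hl : pnth (edge_poly d u v) (size (edge_poly d u v)).-1 = pos d v.
  by rewrite hsz /pnth /edge_poly /= nth_cat ltnn subnn.
have [o c] := bendless (p := edge_poly d u v) ltac:(rewrite hsz; lia)
  (proj1 (hsimp u v he)) hb (hoct u v he).
by rewrite hl in o c; split.
Qed.

Lemma copy_bend n (e : rel 'I_n) (d : drawing n) (a b c w : 'I_n) :
  planar_octilinear_drawing e d ->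
  is_edge e a b -> is_edge e a c -> is_edge e a w ->
  is_edge e b c -> is_edge e b w -> is_edge e c w ->
  ~ (edge_bends d a b = 0 /\ edge_bends d a c = 0 /\ edge_bends d a w = 0 /\
        edge_bends d b c = 0 /\ edge_bends d b w = 0 /\ edge_bends d c w = 0).
Proof.
move=> hd eab eac eaw ebc ebw ecw [bab [bac [baw [bbc [bbw bcw]]]]].
have [oab cab] := edge_facts hd eab bab.
have [oac cac] := edge_facts hd eac bac.
have [oaw caw] := edge_facts hd eaw baw.
have [obc cbc] := edge_facts hd ebc bbc.
have [obw cbw] := edge_facts hd ebw bbw.
have [ocw ccw] := edge_facts hd ecw bcw.
move: (hd) => [[inj [_ [hv hx]]] _].
have lab : (a < b) by case/andP: eab.
have lac : (a < c) by case/andP: eac.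
have law : (a < w) by case/andP: eaw.
have lbc : (b < c) by case/andP: ebc.
have lbw : (b < w) by case/andP: ebw.
have lcw : (c < w) by case/andP: ecw.
have ne : forall x y : 'I_n, (x < y) -> x <> y by move=> x y h exy; rewrite exy ltnn in h.
have ne' : forall x y : 'I_n, (x < y) -> y <> x by move=> x y h exy; rewrite exy ltnn in h.
have np : forall x y : 'I_n, (x < y) -> pos d x <> pos d y by move=> x y h /inj; apply: ne.
have nv : forall x y z : 'I_n, is_edge e x y -> z <> x -> z <> y ->
   (forall t, on_seg (pos d x) (pos d y) t -> on_polyline (edge_poly d x y) t) ->
   ~ on_seg (pos d x) (pos d y) (pos d z).
  by move=> x y z exy h1 h2 cv os; apply: (hv x y z exy h1 h2); apply: cv.
have nx : forall x y x' y' : 'I_n, is_edge e x y -> is_edge e x' y' ->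
   x <> x' -> x <> y' -> y <> x' -> y <> y' ->
   (forall t, on_seg (pos d x) (pos d y) t -> on_polyline (edge_poly d x y) t) ->
   (forall t, on_seg (pos d x') (pos d y') t -> on_polyline (edge_poly d x' y') t) ->
   ~ (exists t, on_seg (pos d x) (pos d y) t /\ on_seg (pos d x') (pos d y') t).
  move=> x y x' y' e1 e2 h1 h2 h3 h4 c1 c2 [t [s1 s2]].
  have hneq : (x, y) <> (x', y') by case=> h _; exact: h1 h.
  have [z [h5 [h6 _]]] := hx x y x' y' t e1 e2 hneq (c1 t s1) (c2 t s2).
  case: h5 => -> in h6; case: h6 => h; [exact: h1 h|exact: h2 h|exact: h3 h|exact: h4 h].
apply: (@K4_core (pos d a) (pos d b) (pos d c) (pos d w)); try (by apply: np);
  try done.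
all: first [ apply: nv; by [ | apply: ne | apply: ne' ]
           | apply: nx; by [ | apply: ne | apply: ne' ] ].
Qed.


Definition ox (a : nat) : R := match a with 0 => 0 | 1 => 4 | 2 => 0 | _ => 1 end%R.
Definition oy (a : nat) : R := match a with 0 => 0 | 1 => 0 | 2 => 4 | _ => 1 end%R.
Definition P (j a : nat) : pt := (INR j * 10 + ox a, oy a)%R.

Lemma ox_rng a : (0 <= ox a <= 4)%R.
Proof. by case: a => [|[|[|a]]] /=; lra. Qed.

Lemma seg_x j a b x : on_seg (P j a) (P j b) x -> (INR j * 10 <= x.1 <= INR j * 10 + 4)%R.
Proof.
case=> t [ht ->] /=; have := ox_rng a; have := ox_rng b; nra.
Qed.

Lemma jne j j' : j <> j' -> (INR j + 1 <= INR j' \/ INR j' + 1 <= INR j)%R.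
Proof.
move=> h; case: (ltngtP j j') => [l|l|e] //.
- left; rewrite -S_INR; apply le_INR; apply/leP; lia.
- right; rewrite -S_INR; apply le_INR; apply/leP; lia.
Qed.

Lemma P_inj j j' a a' : a < 4 -> a' < 4 -> P j a = P j' a' -> j = j' /\ a = a'.
Proof.
move=> ha ha' e.
have ex : (P j a).1 = (P j' a').1 by rewrite e.
have ey : (P j a).2 = (P j' a').2 by rewrite e.
have hj : j = j'.
  case: (Nat.eq_dec j j') => // /jne h; exfalso.
  move: ex; rewrite /P /=; have := ox_rng a; have := ox_rng a'; lra.
subst j'; split => //; clear e.
move: ex ey; rewrite /P /=.
case: a ha => [|[|[|[|a]]]] // _; case: a' ha' => [|[|[|[|a']]]] // _ /=; lra.
Qed.

Lemma geo_v j j' a b c x : a < b -> b < 4 -> c < 4 ->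
  on_seg (P j a) (P j b) x -> x = P j' c -> j = j' /\ (c = a \/ c = b).
Proof.
move=> hab hb hc hs hx.
have := seg_x hs; rewrite hx /P /= => hr.
have hj : j = j'.
  case: (Nat.eq_dec j j') => // /jne h; exfalso; have := ox_rng c; lra.
subst j' x; split => //; clear hr.
case: hs => t [ht]; rewrite /P /= => -[E1 E2].
move: E1 E2; move: (INR j) => J E1 E2.
have {E1} E1 : (ox c = ox a + t * (ox b - ox a))%R.
  apply (Rplus_eq_reg_l (J * 10)); rewrite E1; ring.
move: hab hb hc E1 E2; clear.
case: a => [|[|[|[|a]]]]; case: b => [|[|[|[|b]]]]; case: c => [|[|[|[|c]]]] // _ _ _ /= E1 E2;
try by [left|right]; exfalso; lra.
Qed.

Lemma geo_seg j j' a b a' b' x : a < b -> b < 4 -> a' < b' -> b' < 4 ->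
  on_seg (P j a) (P j b) x -> on_seg (P j' a') (P j' b') x -> (j, a, b) <> (j', a', b') ->
  (j = j' /\ (a = a' \/ a = b') /\ x = P j a) \/ (j = j' /\ (b = a' \/ b = b') /\ x = P j b).
Proof.
move=> hab hb hab' hb' h1 h2 hne.
have r1 := seg_x h1; have r2 := seg_x h2.
have hj : j = j'.
  case: (Nat.eq_dec j j') => // /jne h; exfalso; lra.
subst j'.
case: h1 => t [ht Ex]; case: h2 => s [hs Ey]; rewrite Ex in Ey *.
rewrite /P /= in Ey *; case: Ey.
move: hne; move: (INR j) => J hne E1 E2.
have {}E1 : (ox a + t * (ox b - ox a) = ox a' + s * (ox b' - ox a'))%R.
  apply (Rplus_eq_reg_l (J * 10)).
  have -> : (J * 10 + (ox a' + s * (ox b' - ox a')) = J * 10 + ox a' + s * (J * 10 + ox b' - (J * 10 + ox a')))%R by ring.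
  rewrite -E1; ring.
have {}hne : (a, b) <> (a', b') by move=> [ea eb]; apply: hne; rewrite ea eb.
have -> : (J * 10 + ox a + t * (J * 10 + ox b - (J * 10 + ox a)) = J * 10 + (ox a + t * (ox b - ox a)))%R by ring.
move: E1 E2 hne hab hb hab' hb'; clear -ht hs.
case: a => [|[|[|[|a]]]]; case: b => [|[|[|[|b]]]] //;
case: a' => [|[|[|[|a']]]]; case: b' => [|[|[|[|b']]]] // E1 E2 hne _ _ _ _ /=; (cbn [ox oy] in E1, E2);
first [ by exfalso; apply hne
      | by left; split; [done|split; [(by left)||(by right)| f_equal; lra]]
      | by right; split; [done|split; [(by left)||(by right)| f_equal; lra]]
      | exfalso; lra ].
Qed.


Definition K4c n (e : rel 'I_n) : Prop :=
  exists k, n = 4 * k.+1 /\ forall u v : 'I_n, e u v = (u %/ 4 == v %/ 4) && (u != v).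

Definition dr n : drawing n := Drawing (fun u : 'I_n => P (u %/ 4) (u %% 4)) (fun _ _ => [::]).

Lemma poly2 (a b x : pt) : on_polyline [:: a; b] x -> on_seg a b x.
Proof. by case=> [[|i]] [hi hs]. Qed.

Lemma dr_planar n (e : rel 'I_n) k : n = 4 * k.+1 ->
  (forall u v : 'I_n, e u v = (u %/ 4 == v %/ 4) && (u != v)) -> planar_drawing e (dr n).
Proof.
move=> hn he.
have md : forall u : nat, u %% 4 < 4 by move=> u; lia.
have edg : forall u v : 'I_n, is_edge e u v -> u %/ 4 = v %/ 4 /\ u %% 4 < v %% 4 /\ u <> v.
  move=> u v; rewrite /is_edge he => h; split; [|split]; try lia.
  by move=> euv; move: h; rewrite euv ltnn.
have inj : injective (pos (dr n)).
  move=> u v /= /P_inj [] // h1 h2; apply: ord_inj; lia.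
split; first exact: inj.
split.
  move=> u v huv; have [_ [_ nuv]] := edg u v huv; split.
  - case=> [|[|i]] //= _; by move/inj.
  - move=> i j x hij; rewrite /edge_poly /=; lia.
split.
  move=> u v w huv hwu hwv /poly2 hs.
  have [q [r _]] := edg u v huv; rewrite /dr /= -q in hs.
  have [hj hc] := geo_v (c := w %% 4) (j' := w %/ 4) r (md v) (md w) hs erefl.
  case: hc => hc; [apply: hwu|apply: hwv]; apply: ord_inj; lia.
move=> u v u' v' x huv huv' hne /poly2 h1 /poly2 h2.
have [q [r _]] := edg u v huv; have [q' [r' _]] := edg u' v' huv'.
rewrite /dr /= q in h1; rewrite /dr /= q' in h2.
have hne' : (v %/ 4, u %% 4, v %% 4) <> (v' %/ 4, u' %% 4, v' %% 4).
  case=> e1 e2 e3; apply: hne; f_equal; apply: ord_inj; lia.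
case: (geo_seg r (md v) r' (md v') h1 h2 hne') => [[hj [ha ->]]|[hj [hb ->]]].
- exists u; split; [by left|split; last by rewrite /= q].
  case: ha => ha; [left|right]; apply: ord_inj; lia.
- exists v; split; [by right|split; last by []].
  case: hb => hb; [left|right]; apply: ord_inj; lia.
Qed.

Lemma K4c_deg n (e : rel 'I_n) k : n = 4 * k.+1 ->
  (forall u v : 'I_n, e u v = (u %/ 4 == v %/ 4) && (u != v)) -> forall u, deg e u <= 4.
Proof.
move=> hn he u; rewrite /deg.
pose f := fun v : 'I_n => (inord (v %% 4) : 'I_4).
have hinj : {in [set v | e u v] &, injective f}.
  move=> x y; rewrite !inE !he => /andP [/eqP hx _] /andP [/eqP hy _] /(congr1 val) /=.
  rewrite !inordK; try lia. move=> h; apply: ord_inj; lia.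
rewrite -(card_in_imset hinj).
by apply: leq_trans (max_card _) _; rewrite card_ord.
Qed.

Lemma eb_le_total n (e : rel 'I_n) (d : drawing n) u v :
  is_edge e u v -> edge_bends d u v <= total_bends e d.
Proof.
move=> h; rewrite /total_bends (bigD1 u) //= (bigD1 v) //=.
by rewrite -addnA leq_addr.
Qed.

Lemma copy_has_bend n (e : rel 'I_n) (d : drawing n) k j :
  n = 4 * k.+1 -> (forall u v : 'I_n, e u v = (u %/ 4 == v %/ 4) && (u != v)) ->
  j <= k -> planar_octilinear_drawing e d ->
  exists x y : 'I_n, [/\ is_edge e x y, x %/ 4 = j & 0 < edge_bends d x y].
Proof.
move=> hn he hj hd.
have mk : forall i, i < 4 -> {x : 'I_n | nat_of_ord x = 4 * j + i}.
  move=> i hi; have h : 4 * j + i < n by lia. by exists (Ordinal h).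
have [a ha] := mk 0 isT; have [b hb] := mk 1 isT.
have [c hc] := mk 2 isT; have [w hw] := mk 3 isT.
have ie : forall x y : 'I_n, forall i i', nat_of_ord x = 4 * j + i -> nat_of_ord y = 4 * j + i' ->
    i < i' < 4 -> is_edge e x y.
  move=> x y i i' hx hy hi; rewrite /is_edge he -val_eqE /= hx hy; lia.
have eab := ie a b 0 1 ha hb isT; have eac := ie a c 0 2 ha hc isT.
have eaw := ie a w 0 3 ha hw isT; have ebc := ie b c 1 2 hb hc isT.
have ebw := ie b w 1 3 hb hw isT; have ecw := ie c w 2 3 hc hw isT.
have qa : a %/ 4 = j by rewrite ha; lia.
have qb : b %/ 4 = j by rewrite hb; lia.
have qc : c %/ 4 = j by rewrite hc; lia.
case: (posnP (edge_bends d a b)) => h1; last by exists a, b.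
case: (posnP (edge_bends d a c)) => h2; last by exists a, c.
case: (posnP (edge_bends d a w)) => h3; last by exists a, w.
case: (posnP (edge_bends d b c)) => h4; last by exists b, c.
case: (posnP (edge_bends d b w)) => h5; last by exists b, w.
case: (posnP (edge_bends d c w)) => h6; last by exists c, w.
by exfalso; apply: (copy_bend hd eab eac eaw ebc ebw ecw).
Qed.

Theorem mainTheorem4 :
  exists C : forall n : nat, rel 'I_n -> Prop,
    (forall n (e : rel 'I_n), C n e -> simple_graph e /\ k_planar 4 e) /\
    (* the class is infinite *)
    (forall N : nat, exists n (e : rel 'I_n), N <= n /\ C n e) /\
    (* no planar octilinear drawing without bends *)
    (forall n (e : rel 'I_n), C n e ->
       ~ exists d : drawing n, planar_octilinear_drawing e d /\ total_bends e d = 0) /\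
    (* Omega(n) bends in every planar octilinear drawing with <= 1 bend per edge *)
    (exists (c : R) (n0 : nat), (0 < c)%R /\
       forall n (e : rel 'I_n) (d : drawing n), C n e -> n0 <= n ->
         planar_octilinear_drawing e d ->
         (forall u v, is_edge e u v -> edge_bends d u v <= 1) ->
         (c * INR n <= INR (total_bends e d))%R).
Proof.
exists K4c; split; [|split; [|split]].
- move=> n e [k [hn he]]; split.
  + split => [u v|u]; rewrite !he; first by rewrite eq_sym [v == u]eq_sym.
    by rewrite !eqxx.
  + split; [exists (dr n); exact: dr_planar hn he | exact: K4c_deg hn he].
- move=> N; exists (4 * N.+1), (fun u v : 'I_(4 * N.+1) => (u %/ 4 == v %/ 4) && (u != v)).
  split; first lia. by exists N.
- move=> n e [k [hn he]] [d [hd h0]].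
  have [x [y [exy _ hb]]] := copy_has_bend hn he (leq0n k) hd.
  have := eb_le_total d exy; rewrite h0; lia.
- exists (/ 4)%R, 0; split; first lra.
  move=> n e d [k [hn he]] _ hd _.
  have hk : k.+1 <= total_bends e d.
    rewrite /total_bends (partition_big (fun u : 'I_n => (inord (u %/ 4) : 'I_k.+1)) predT) //=.
    apply: (@leq_trans (\sum_(j < k.+1) 1)); first by rewrite sum1_card card_ord.
    apply: leq_sum => j _.
    have [x [y [exy qx hb]]] := copy_has_bend hn he (leq_ord j) hd.
    rewrite (bigD1 x) /=; last first.
      apply/eqP; apply: ord_inj; rewrite /= qx inordK //.
    apply: leq_trans (leq_addr _ _).
    rewrite (bigD1 y) //=; apply: leq_trans (leq_addr _ _); exact: hb.
  have -> : INR n = (INR 4 * INR k.+1)%R by rewrite -mult_INR hn.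
  have : (INR k.+1 <= INR (total_bends e d))%R by apply: le_INR; apply/leP.
  rewrite /= ; lra.
Qed.
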